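(* Let $g:(0,\infty)\to(0,\infty)$ be a function which is constant on the interval $(0,4)$ and such that, for some positive real number $K$, $g(x)=K\left(\frac{x}{2}+1\right)g\left(\frac{x}{2}+1\right)$ for all $x\ge4$. Then there exists a positive real number $c$ such that $g(x)<x^{\log_2(x)/2+c}$ for every sufficiently large real number $x$. *)

(* Defs.v *)
From Stdlib Require Export Reals.
Open Scope R_scope.

Definition log2 (x : R) : R := ln x / ln 2.

(* Main.v *)
Require Import Defs.
From Stdlib Require Import Reals Lra Psatz.
Open Scope R_scope.

Lemma lnle x y : 0 < x -> x <= y -> ln x <= ln y.
Proof. intros H [H1|H1]; [left; apply ln_increasing; lra| subst; lra]. Qed.

Lemma exple x y : x <= y -> exp x <= exp y.
Proof. intros [H|H]; [left; apply exp_increasing; lra| subst; lra]. Qed.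

Lemma ln_half z : 0 < z -> ln (z/2) = ln z - ln 2.
Proof. intros Hz. unfold Rdiv. rewrite ln_mult by lra. rewrite ln_Rinv by lra. ring. Qed.

Lemma ln2pos : 0 < ln 2.
Proof. rewrite <- ln_1. apply ln_increasing; lra. Qed.

Lemma pow2_big x : exists n:nat, x < 2 ^ n.
Proof.
  destruct (INR_archimed 1 x) as [n Hn]; try lra.
  exists n. assert (INR n <= 2 ^ n).
  { clear Hn. induction n as [|n IH]. simpl; lra.
    rewrite S_INR. simpl pow. assert (1 <= 2 ^ n) by (apply pow_R1_Rle; lra). lra. }
  lra.
Qed.

Definition Phi (c z : R) := exp ((ln z)^2 / (2 * ln 2) + c * ln z).

Lemma key c K z : 0 < K -> ln K + 2 * ln 2 <= c * ln 2 -> 2 <= z ->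
  K * (z/2 + 2) * Phi c (z/2) <= Phi c z.
Proof.
  intros HK Hc Hz. unfold Phi. rewrite ln_half by lra.
  pose proof ln2pos as H2.
  assert (Hy : z/2 + 2 <= exp (ln 2 + ln z)).
  { rewrite exp_plus, !exp_ln by lra. lra. }
  assert (HK' : K = exp (ln K)) by (rewrite exp_ln; lra).
  assert (HP : 0 < exp ((ln z - ln 2) ^ 2 / (2 * ln 2) + c * (ln z - ln 2))) by apply exp_pos.
  apply Rle_trans with (exp (ln K) * exp (ln 2 + ln z) *
     exp ((ln z - ln 2) ^ 2 / (2 * ln 2) + c * (ln z - ln 2))).
  { rewrite <- HK'. apply Rmult_le_compat_r; [lra|]. apply Rmult_le_compat_l; lra. }
  rewrite <- !exp_plus. apply exple.
  assert (E : (ln z - ln 2) ^ 2 / (2 * ln 2) = (ln z)^2 / (2 * ln 2) - ln z + ln 2 / 2)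
    by (field; lra).
  rewrite E. lra.
Qed.

Lemma Phi_ge1 c z : 0 < c -> 1 <= z -> 1 <= Phi c z.
Proof.
  intros Hc Hz. unfold Phi. rewrite <- exp_0. apply exple.
  pose proof ln2pos. assert (0 <= ln z) by (rewrite <- ln_1; apply lnle; lra).
  assert (0 <= ln z ^ 2 / (2 * ln 2)).
  { unfold Rdiv. apply Rmult_le_pos. nra. left; apply Rinv_0_lt_compat; lra. }
  nra.
Qed.

Theorem lemma8p7 (g : R -> R) (K : R)
  (hpos : forall x, 0 < x -> 0 < g x)
  (hconst : exists a, forall x, 0 < x < 4 -> g x = a)
  (hK : 0 < K)
  (hrec : forall x, 4 <= x -> g x = K * (x / 2 + 1) * g (x / 2 + 1)) :
  exists c, 0 < c /\ exists M, forall x, M <= x ->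
    g x < Rpower x (log2 x / 2 + c).
Proof.
  destruct hconst as [a Ha].
  assert (Hapos : 0 < a) by (rewrite <- (Ha 1); [apply hpos|]; lra).
  pose proof ln2pos as H2.
  set (c := Rmax 1 (ln K / ln 2 + 2)).
  assert (Hc1 : 1 <= c) by apply Rmax_l.
  assert (Hc : ln K + 2 * ln 2 <= c * ln 2).
  { assert (ln K / ln 2 + 2 <= c) by apply Rmax_r.
    assert (ln K = (ln K / ln 2) * ln 2) by (field; lra). nra. }
  assert (P : forall n:nat, forall x, 3 <= x < 2 ^ (S n) + 2 -> g x <= a * Phi c (x - 2)).
  { induction n as [|n IH]; intros x Hx.
    - simpl in Hx. rewrite Ha by lra.
      pose proof (Phi_ge1 c (x-2) ltac:(lra) ltac:(lra)). nra.
    - destruct (Rlt_le_dec x 4) as [Hx4|Hx4].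
      + rewrite Ha by lra.
        pose proof (Phi_ge1 c (x-2) ltac:(lra) ltac:(lra)). nra.
      + rewrite hrec by lra.
        assert (Hy : 3 <= x/2+1 < 2 ^ S n + 2) by (simpl in Hx |- *; lra).
        pose proof (IH _ Hy) as IHy.
        replace (x/2+1-2) with ((x-2)/2) in IHy by field.
        pose proof (key c K (x-2) hK Hc ltac:(lra)) as Hk.
        replace ((x-2)/2+2) with (x/2+1) in Hk by field.
        assert (0 < K * (x/2+1)) by nra.
        apply Rle_trans with (K * (x/2+1) * (a * Phi c ((x-2)/2))).
        { apply Rmult_le_compat_l; lra. }
        nra. }
  exists (c + 1). split; [lra|].
  exists (Rmax 3 (a + 1)). intros x Hx.
  assert (Hx3 : 3 <= x) by (eapply Rle_trans; [apply Rmax_l|exact Hx]).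
  assert (Hxa : a + 1 <= x) by (eapply Rle_trans; [apply Rmax_r|exact Hx]).
  destruct (pow2_big x) as [n Hn].
  assert (Hg : g x <= a * Phi c (x - 2)).
  { apply (P n). split; [lra|]. simpl. assert (1 <= 2 ^ n) by (apply pow_R1_Rle; lra). lra. }
  assert (Hm : Phi c (x - 2) <= Phi c x).
  { unfold Phi. apply exple.
    assert (0 <= ln (x-2)) by (rewrite <- ln_1; apply lnle; lra).
    assert (ln (x-2) <= ln x) by (apply lnle; lra).
    assert (ln (x-2) ^ 2 <= ln x ^2) by nra.
    assert (ln (x - 2) ^ 2 / (2 * ln 2) <= ln x ^ 2 / (2 * ln 2)).
    { unfold Rdiv. apply Rmult_le_compat_r; [left; apply Rinv_0_lt_compat; lra| lra]. }
    nra. }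
  assert (HPpos : 0 < Phi c x) by apply exp_pos.
  assert (Hfin : Rpower x (log2 x / 2 + (c + 1)) = x * Phi c x).
  { assert (Ex : x * Phi c x = exp (ln x) * Phi c x) by (rewrite exp_ln; lra).
    rewrite Ex. unfold Rpower, Phi, log2.
    rewrite <- exp_plus. f_equal. field. lra. }
  rewrite Hfin. nra.
Qed.
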